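(* For any menu $M=\{(q_i,t_i)\}$ of threshold certificates offered by the certifier, in the resulting equilibrium market outcome each producer type $\psi$ trades with consumer type $\phi(\psi)$, where $F(\phi(\psi))=G(\psi)$ (as cumulative distribution functions). The quality level at which $\psi$ and $\phi(\psi)$ trade is a menu threshold $q_i$ maximizing $f(q_i;\phi(\psi))-g(q_i;\psi)-t_i$, and this level is weakly increasing in $\psi$.
   Context: Certification market. Producers have types $\psi\in\mathbb{R}_+$ distributed by an atomless probability measure $G$ with compact support; consumers have types $\phi\in\mathbb{R}_+$ distributed by an atomless probability measure $F$ with compact support. Goods have quality $q\in[0,1]$. Production cost $g(q;\psi)$ is weakly convex and non-decreasing in $q$ with $g(0;\psi)=0$; consumer value $f(q;\phi)$ is weakly concave and non-decreasing in $q$ with $f(0;\phi)=0$, $0\le f\le1$. Strict single-crossing: for all $\phi_1<\phi_2$, $q_1<q_2$: $f(q_2;\phi_2)-f(q_1;\phi_2)>f(q_2;\phi_1)-f(q_1;\phi_1)$; for all $\psi_1<\psi_2$, $q_1<q_2$: $g(q_2;\psi_2)-g(q_1;\psi_2)<g(q_2;\psi_1)-g(q_1;\psi_1)$. Utilities are quasilinear (consumer: $f(q;\phi)-p$; producer: $p-g(q;\psi)-t$ where $t$ is the transfer to the certifier). Threshold certificates: every certificate has the form $[q,1]$, identified with $q$; a menu is $M=\{(q_i,t_i)\}$, always including $(0,0)$; a producer who selects threshold $q$ produces at quality exactly $q$ and pays $t$. Producers choose certificates simultaneously (an equilibrium is a strategy $\psi\mapsto\Gamma(\psi)\in M$ from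 which no producer can profitably deviate), then goods trade in a competitive (Walrasian) market equilibrium in which each consumer buys a utility-maximizing quality level at market prices and markets clear. *)

(* Defs.v *)
From HB Require Import structures.
From mathcomp Require Import all_boot all_order all_algebra.
From mathcomp Require Import all_classical all_reals all_analysis.
Set Implicit Arguments. Unset Strict Implicit. Unset Printing Implicit Defensive.
Import Order.TTheory GRing.Theory Num.Theory.
Import numFieldNormedType.Exports.
Local Open Scope classical_set_scope.
Local Open Scope ring_scope.

Definition atomless (R : realType) (mu : probability R R) : Prop :=
  forall x : R, mu [set x] = 0%E.

Definition compact_support_nonneg (R : realType) (mu : probability R R) : Prop :=
  exists K : set R, compact K /\ K `<=` `[0, +oo[%classic /\ mu (~` K) = 0%E.

Definition cdfm (R : realType) (mu : probability R R) (x : R) : \bar R :=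
  mu `]-oo, x]%classic.

(** [q] ranges over qualities in [0,1]; types over R_+. *)
Definition wconvex_on01 (R : realType) (h : R -> R) : Prop :=
  forall x y l : R, 0 <= x <= 1 -> 0 <= y <= 1 -> 0 <= l <= 1 ->
    h (l * x + (1 - l) * y) <= l * h x + (1 - l) * h y.

Definition wconcave_on01 (R : realType) (h : R -> R) : Prop :=
  wconvex_on01 (fun x => - h x).

Definition nondecr_on01 (R : realType) (h : R -> R) : Prop :=
  forall x y : R, 0 <= x -> x <= y -> y <= 1 -> h x <= h y.

(** Production cost [g q psi] and consumer value [f q phi]. *)
Definition cost_assumptions (R : realType) (g : R -> R -> R) : Prop :=
  (forall psi, 0 <= psi ->
     [/\ wconvex_on01 (fun q => g q psi), nondecr_on01 (fun q => g q psi)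
       & g 0 psi = 0]) /\
  (forall psi1 psi2 q1 q2, 0 <= psi1 -> psi1 < psi2 ->
     0 <= q1 -> q1 < q2 -> q2 <= 1 ->
     g q2 psi2 - g q1 psi2 < g q2 psi1 - g q1 psi1).

Definition value_assumptions (R : realType) (f : R -> R -> R) : Prop :=
  (forall phi, 0 <= phi ->
     [/\ wconcave_on01 (fun q => f q phi), nondecr_on01 (fun q => f q phi),
         f 0 phi = 0
       & forall q, 0 <= q <= 1 -> 0 <= f q phi <= 1]) /\
  (forall phi1 phi2 q1 q2, 0 <= phi1 -> phi1 < phi2 ->
     0 <= q1 -> q1 < q2 -> q2 <= 1 ->
     f q2 phi2 - f q1 phi2 > f q2 phi1 - f q1 phi1).

(** A menu of threshold certificates: a set of pairs (threshold q, fee t),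
    thresholds in [0,1], always containing (0,0). *)
Definition is_menu (R : realType) (M : set (R * R)) : Prop :=
  M (0, 0) /\ (forall m, M m -> 0 <= m.1 <= 1).

(** Equilibrium given menu [M]:
    - [Gam psi] : certificate chosen by producer type psi (produces at quality
      (Gam psi).1 and pays (Gam psi).2),
    - [p q] : market price of a good of quality q,
    - [c phi] : quality bought by consumer type phi. *)
Definition equilibrium (R : realType) (G F : probability R R)
  (g f : R -> R -> R) (M : set (R * R))
  (Gam : R -> R * R) (p : R -> R) (c : R -> R) : Prop :=
  [/\ (forall psi, 0 <= psi -> M (Gam psi)) /\
      (forall psi, 0 <= psi -> forall m, M m ->
         p m.1 - g m.1 psi - m.2 <= p (Gam psi).1 - g (Gam psi).1 psi - (Gam psi).2),
      (forall phi, 0 <= phi -> exists2 m, M m & c phi = m.1),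
      (forall phi, 0 <= phi -> forall m, M m ->
         f m.1 phi - p m.1 <= f (c phi) phi - p (c phi)),
      measurable_fun setT (fun psi => (Gam psi).1) /\
      measurable_fun setT c
    & (forall A : set R, measurable A ->
         G ((fun psi => (Gam psi).1) @^-1` A) = F (c @^-1` A))].

(* Main.v *)
Require Import Defs.
From HB Require Import structures.
From mathcomp Require Import all_boot all_order all_algebra.
From mathcomp Require Import all_classical all_reals all_analysis.
From mathcomp Require Import lra.
Import Order.TTheory GRing.Theory Num.Theory.
Import numFieldNormedType.Exports.
Local Open Scope classical_set_scope.
Local Open Scope ring_scope.

Definition rq (R : realType) (n : nat) : R :=
  if (pickle_inv n : option rat) is Some q then ratr q else 0.

Lemma rq_dense (R : realType) (x y : R) : x < y -> exists n, x < rq R n < y.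
Proof.
move=> xy; have [q] := rat_in_itvoo xy; rewrite in_itv /= => /andP[h1 h2].
by exists (pickle q); rewrite /rq pickleK_inv h1 h2.
Qed.

Arguments rq_dense {R x y}.

Lemma ext_le0 (R : realType) (a b : \bar R) : b \is a fin_num -> (0 <= a)%E ->
  (a + b <= b)%E -> a = 0%E.
Proof.
case: b => [b| |] // _; case: a => [a| |] //.
- move=> a0 h; congr (_%:E); move: h a0; rewrite -(EFinD a b) !lee_fin => h a0; lra.
Qed.

Lemma negl_up (R : realType) (mu : probability R R) (S : set R) :
  measurable S -> atomless mu ->
  mu.-negligible [set x | S x /\ mu (S `&` `]x, +oo[) = 0%E].
Proof.
move=> mS atm.
set B := [set x | _].
have mI : forall y : R, measurable (S `&` `]y, +oo[%classic).
  by move=> y; apply: measurableI => //; exact: measurable_itv.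
have [[x0 [Bx0 minx0]]|nomin] := pselect (exists x0, B x0 /\ forall x, B x -> x0 <= x).
  apply: (@negligibleS _ _ _ _ ([set x0] `|` (S `&` `]x0, +oo[))).
    move=> x Bx; have := minx0 _ Bx; rewrite le_eqVlt => /orP[/eqP ->|lt].
      by left.
    by right; split; [case: Bx|rewrite /= in_itv /= andbT].
  apply: negligibleU; first by apply/(negligibleP _ (measurable_set1 x0)); exact: atm.
  by apply/(negligibleP _ (mI x0)); case: Bx0.
pose A n := [set x | S x /\ rq R n < x /\ mu (S `&` `]rq R n, +oo[) = 0%E].
apply: (@negligibleS _ _ _ _ (\bigcup_n A n)).
  move=> x Bx.
  have [x' [Bx' x'x]] : exists x', B x' /\ x' < x.
    apply: contrapT => hn; apply: nomin; exists x; split => // y By.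
    rewrite leNgt; apply/negP => yx; apply: hn; by exists y.
  have [n /andP[h1 h2]] := rq_dense x'x.
  exists n => //; split; first by case: Bx.
  split => //; apply/eqP; rewrite -measure_le0; case: Bx' => _ <-.
  apply: le_measure; rewrite ?inE //.
  move=> z [Sz]; rewrite /= !in_itv /= !andbT => hz; split => //.
  by rewrite (lt_trans h1).
apply: negligible_bigcup => n.
have [h|h] := pselect (mu (S `&` `]rq R n, +oo[) = 0%E).
  apply: (@negligibleS _ _ _ _ (S `&` `]rq R n, +oo[)).
    by move=> x [Sx [lt _]]; split => //; rewrite /= in_itv /= andbT.
  exact/(negligibleP _ (mI _)).
apply: (@negligibleS _ _ _ _ set0); last exact: negligible_set0.
by move=> x [_ [_ ]].
Qed.

Lemma negl_down (R : realType) (mu : probability R R) (T : set R) :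
  measurable T ->
  mu.-negligible [set x | T x /\ mu (T `&` `]-oo, x]) = 0%E].
Proof.
move=> mT.
set B := [set x | _].
have mI : forall y : R, measurable (T `&` `]-oo, y]%classic).
  by move=> y; apply: measurableI => //; exact: measurable_itv.
have [[x0 [Bx0 maxx0]]|nomax] := pselect (exists x0, B x0 /\ forall x, B x -> x <= x0).
  apply: (@negligibleS _ _ _ _ (T `&` `]-oo, x0])).
    move=> x Bx; split; first by case: Bx.
    by rewrite /= in_itv /= maxx0.
  by apply/(negligibleP _ (mI x0)); case: Bx0.
pose A n := [set x | T x /\ x < rq R n /\ mu (T `&` `]-oo, rq R n]) = 0%E].
apply: (@negligibleS _ _ _ _ (\bigcup_n A n)).
  move=> x Bx.
  have [x' [Bx' x'x]] : exists x', B x' /\ x < x'.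
    apply: contrapT => hn; apply: nomax; exists x; split => // y By.
    rewrite leNgt; apply/negP => yx; apply: hn; by exists y.
  have [n /andP[h1 h2]] := rq_dense x'x.
  exists n => //; split; first by case: Bx.
  split => //; apply/eqP; rewrite -measure_le0; case: Bx' => _ <-.
  apply: le_measure; rewrite ?inE //.
  move=> z [Tz]; rewrite /= !in_itv /= => hz; split => //.
  by rewrite (le_trans hz) // ltW.
apply: negligible_bigcup => n.
have [h|h] := pselect (mu (T `&` `]-oo, rq R n]) = 0%E).
  apply: (@negligibleS _ _ _ _ (T `&` `]-oo, rq R n])).
    by move=> x [Tx [lt _]]; split => //; rewrite /= in_itv /= ltW.
  exact/(negligibleP _ (mI _)).
apply: (@negligibleS _ _ _ _ set0); last exact: negligible_set0.
by move=> x [_ [_ ]].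
Qed.

Theorem corollary1 (R : realType) (G F : probability R R)
  (g f : R -> R -> R) (M : set (R * R))
  (Gam : R -> R * R) (p : R -> R) (c : R -> R) :
  atomless G -> compact_support_nonneg G ->
  atomless F -> compact_support_nonneg F ->
  cost_assumptions g -> value_assumptions f ->
  is_menu M ->
  equilibrium G F g f M Gam p c ->
  (forall psi1 psi2, 0 <= psi1 -> psi1 <= psi2 -> (Gam psi1).1 <= (Gam psi2).1) /\
  {ae G, forall psi, forall phi, 0 <= phi -> cdfm F phi = cdfm G psi ->
     c phi = (Gam psi).1 /\
     (forall m, M m ->
        f m.1 phi - g m.1 psi - m.2 <= f (Gam psi).1 phi - g (Gam psi).1 psi - (Gam psi).2)}.
Proof.
move=> atG csG atF csF [_ gsc] [_ fsc] [M00 Mq] [[GamM Gopt] cM copt [mX mc] clear].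
set X := fun psi => (Gam psi).1.
have Xmono : forall psi1 psi2, 0 <= psi1 -> psi1 <= psi2 -> X psi1 <= X psi2.
  move=> p1 p2 h1; rewrite le_eqVlt => /orP[/eqP<-//|h12].
  rewrite leNgt; apply/negP => hlt.
  have p20 : 0 <= p2 by rewrite (le_trans h1 (ltW h12)).
  have := Gopt _ h1 _ (GamM _ p20); have := Gopt _ p20 _ (GamM _ h1).
  have /andP[q10 q11] := Mq _ (GamM _ h1); have /andP[q20 q21] := Mq _ (GamM _ p20).
  have := gsc p1 p2 (X p2) (X p1) h1 h12 q20 hlt q11.
  rewrite /X; lra.
have cmono : forall phi1 phi2, 0 <= phi1 -> phi1 <= phi2 -> c phi1 <= c phi2.
  move=> p1 p2 h1; rewrite le_eqVlt => /orP[/eqP<-//|h12].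
  rewrite leNgt; apply/negP => hlt.
  have p20 : 0 <= p2 by rewrite (le_trans h1 (ltW h12)).
  have [m1 Mm1 e1] := cM _ h1; have [m2 Mm2 e2] := cM _ p20.
  have := copt _ h1 _ Mm2; have := copt _ p20 _ Mm1.
  have /andP[q10 q11] := Mq _ Mm1; have /andP[q20 q21] := Mq _ Mm2.
  rewrite -e1 -e2 in q10 q11 q20 q21 *.
  have := fsc p1 p2 (c p2) (c p1) h1 h12 q20 hlt q11.
  lra.
split; first exact: Xmono.
have negnull : forall mu : probability R R, compact_support_nonneg mu ->
    mu `]-oo, 0[%classic = 0%E.
  move=> mu [K [cK [KP muK]]]; apply/eqP; rewrite -measure_le0 -muK.
  apply: le_measure; rewrite ?inE //.
  - apply: measurableC; apply: measurable_realfun.closed_measurable; apply: compact_closed cK; exact: Rhausdorff.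
  move=> x; rewrite /= in_itv /= => x0 Kx; have := KP _ Kx.
  by rewrite /= in_itv /= andbT leNgt x0.
have negG := negnull G csG; have negF := negnull F csF.
have mXp : forall Y, measurable Y -> measurable (X @^-1` Y).
  by move=> Y mY; rewrite -[X @^-1` Y]setTI; apply: mX.
have mcp : forall Y, measurable Y -> measurable (c @^-1` Y).
  by move=> Y mY; rewrite -[c @^-1` Y]setTI; apply: mc.
have clr : forall Y, measurable Y -> G (X @^-1` Y) = F (c @^-1` Y).
  by move=> Y mY; apply: clear.
have mi := @measurable_itv R.
pose S n := `[0, +oo[%classic `&` (X @^-1` `]-oo, rq R n]%classic).
pose T n := `[0, +oo[%classic `&` (X @^-1` `]rq R n, +oo[%classic).
have mS : forall n, measurable (S n).
  by move=> n; apply: measurableI; [exact: mi|apply: mXp; exact: mi].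
have mT : forall n, measurable (T n).
  by move=> n; apply: measurableI; [exact: mi|apply: mXp; exact: mi].
pose Bup n := [set x | S n x /\ G (S n `&` `]x, +oo[%classic) = 0%E].
pose Bdn n := [set x | T n x /\ G (T n `&` `]-oo, x]%classic) = 0%E].
rewrite /almost_everywhere.
apply: (@negligibleS _ _ _ _ (`]-oo, 0[%classic `|` \bigcup_n (Bup n `|` Bdn n))); last first.
  apply: negligibleU; first exact/(negligibleP _ (mi _)).
  apply: negligible_bigcup => n; apply: negligibleU.
  - exact: negl_up.
  - exact: negl_down.
move=> psi /= nP; apply: contrapT => nN; apply: nP.
have psi0 : 0 <= psi.
  by rewrite leNgt; apply/negP => h; apply: nN; left; rewrite /= in_itv.
have hup : forall n, ~ Bup n psi.
  by move=> n h; apply: nN; right; exists n => //; left.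
have hdn : forall n, ~ Bdn n psi.
  by move=> n h; apply: nN; right; exists n => //; right.
move=> phi phi0; rewrite /cdfm => hcdf.
have ceq : c phi = X psi.
  apply/eqP; rewrite eq_le; apply/andP; split; rewrite leNgt; apply/negP => hlt.
  - have [n /andP[h1 h2]] := rq_dense hlt.
    apply: (hup n); split.
      by split; rewrite /= in_itv /= ?andbT ?psi0 // ltW.
    apply: (@ext_le0 R _ (G `]-oo, psi]%classic)).
    + exact: fin_num_measure.
    + exact: measure_ge0.
    have mA : measurable (S n `&` `]psi, +oo[%classic) by apply: measurableI.
    rewrite -(measureU G mA (mi _)); last first.
      apply/seteqP; split => x //= [[_ hx1] hx2]; move: hx1 hx2.
      by rewrite !in_itv /= andbT => a b; move: (lt_le_trans a b); rewrite ltxx.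
    apply: (@le_trans _ _ (G (X @^-1` `]-oo, rq R n]%classic `|` `]-oo, 0[%classic))).
      apply: le_measure; rewrite ?inE.
      * exact: measurableU.
      * by apply: measurableU; [apply: mXp|].
      move=> x [[[_ hx] _]|hx]; first by left.
      move: hx; rewrite /= in_itv /= => hx.
      have [x0|x0] := leP 0 x; last by right; rewrite /= in_itv.
      left; rewrite /= in_itv /=; apply: (le_trans (Xmono _ _ x0 hx)).
      exact: ltW.
    apply: (le_trans (measureU2 _ (mXp _ (mi _)) (mi _))).
    rewrite [X in (_ + X <= _)%E](_ : _ = 0%E) ?adde0; last exact: negG.
    apply: (@le_trans _ _ (F (c @^-1` `]-oo, rq R n]%classic))).
      by rewrite -clr; [exact: lexx|exact: mi].
    rewrite -hcdf.
    apply: le_measure; rewrite ?inE; [exact: mcp|exact: mi|].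
    move=> x; rewrite /= !in_itv /= => hx; rewrite leNgt; apply/negP => px.
    have := cmono _ _ phi0 (ltW px).
    by rewrite leNgt (le_lt_trans hx h2).
  - have [n /andP[h1 h2]] := rq_dense hlt.
    apply: (hdn n); split.
      by split; rewrite /= in_itv /= ?andbT.
    apply: (@ext_le0 R _ (G (X @^-1` `]-oo, rq R n]%classic))).
    + by apply: fin_num_measure; apply: mXp.
    + exact: measure_ge0.
    have mA : measurable (T n `&` `]-oo, psi]%classic) by apply: measurableI.
    rewrite -(measureU G mA (mXp _ (mi _))); last first.
      apply/seteqP; split => x //= [[[_ hx1] _] hx2]; move: hx1 hx2.
      by rewrite /= !in_itv /= andbT => a b; move: (lt_le_trans a b); rewrite ltxx.
    apply: (@le_trans _ _ (G `]-oo, psi]%classic)).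
      apply: le_measure; rewrite ?inE.
      * by apply: measurableU; [|apply: mXp].
      * exact: mi.
      move=> x [[_ hx]|hx]; first by move: hx; rewrite /= !in_itv.
      move: hx; rewrite /= !in_itv /= => hx; rewrite leNgt; apply/negP => px.
      have := Xmono _ _ psi0 (ltW px).
      by rewrite leNgt (le_lt_trans hx h2).
    rewrite -hcdf.
    apply: (@le_trans _ _ (F (c @^-1` `]-oo, rq R n]%classic `|` `]-oo, 0[%classic))).
      apply: le_measure; rewrite ?inE.
      * exact: mi.
      * by apply: measurableU; [apply: mcp|].
      move=> x; rewrite /= in_itv /= => hx.
      have [x0|x0] := leP 0 x; last by right; rewrite /= in_itv.
      left; rewrite /= in_itv /=; apply: (le_trans (cmono _ _ x0 hx)).
      exact: ltW.
    apply: (le_trans (measureU2 _ (mcp _ (mi _)) (mi _))).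
    rewrite [X in (_ + X <= _)%E](_ : _ = 0%E) ?adde0; last exact: negF.
    by rewrite clr.
split => // m Mm; have := Gopt _ psi0 _ Mm; have := copt _ phi0 _ Mm.
rewrite ceq /X; lra.
Qed.
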